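(* Let $K\ge 2$ and $N\ge 1$ be integers, $g>0$, $d>0$, $x_0\in\mathbb{R}$, and consider the $K$-PAM Gaussian channel $Y=gX+W$, where $X$ takes values in $\{x_i=x_0+id: i=0,1,\dots,K-1\}$ with a probability distribution $P_X$ satisfying $P_X(x_i)>0$ for all $i$, and $W\sim\mathcal N(0,1)$ is independent of $X$; write $f(y\mid x)=\frac{1}{\sqrt{2\pi}}e^{-(y-gx)^2/2}$. Let $Z:\mathbb{R}\to\{1,\dots,N\}$ be a quantizer that maximizes the mutual information $I(X;Z(Y))$, and assume the resulting posteriors satisfy $P_{X|Z}(x\mid z)>0$ for all $x$ and all $z$ in the range of $Z$. For each such $z$ define $$S(z)=\Big\{y\in\mathbb{R}:\ \sum_{x}P_X(x)f(y\mid x)\ln P_{X|Z}(x\mid z)\ \ge\ \sum_{x}P_X(x)f(y\mid x)\ln P_{X|Z}(x\mid z')\ \text{ for all } z'\neq z \text{ in the range of } Z\Big\}$$ (the set of channel outputs assigned to $z$ by the optimality condition $Z(y)\in\arg\max_{z}\sum_x P_X(x)f(y\mid x)\ln P_{X|Z}(x\mid z)$ satisfied by capacity-maximizing quantizers). Then each $S(z)$ is a union of at most $(N-1)\lfloor\frac{K-1}{2}\rfloor+1$ pairwise disjoint intervals.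
   Context: A quantizer is any measurable map $Z:\mathbb{R}\to\{1,\dots,N\}$ applied to the channel output; $P_{X|Z}$ denotes the conditional distribution of the input given the quantized output $Z(Y)$. Intervals may be unbounded or degenerate (single points). *)

(* Defs.v *)
From Stdlib Require Import Reals Lra Lia Arith Classical ClassicalEpsilon.
Open Scope R_scope.

Fixpoint sumR (n : nat) (f : nat -> R) : R :=
  match n with O => 0 | S n' => sumR n' f + f n' end.

Inductive borel : (R -> Prop) -> Prop :=
| borel_interval (a b : R) : borel (fun y => a < y < b)
| borel_compl (A : R -> Prop) : borel A -> borel (fun y => ~ A y)
| borel_cunion (A : nat -> R -> Prop) :
    (forall n, borel (A n)) -> borel (fun y => exists n, A n y)
| borel_ext (A B : R -> Prop) : borel A -> (forall y, A y <-> B y) -> borel B.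

Definition gauss_pdf (m y : R) : R := / sqrt (2 * PI) * exp (- (y - m) ^ 2 / 2).

(* (b - a) * sup_{[a,b]} gauss_pdf m : the sup is attained at the point of
   [a,b] closest to m. *)
Definition gweight (m a b : R) : R := (b - a) * gauss_pdf m (Rmax a (Rmin m b)).

Definition cover_sum (m : R) (A : R -> Prop) (r : R) : Prop :=
  exists a b : nat -> R,
    (forall n, a n <= b n) /\
    (forall y, A y -> exists n, a n <= y <= b n) /\
    infinite_sum (fun n => gweight m (a n) (b n)) r.

Definition is_glb (E : R -> Prop) (v : R) : Prop :=
  (forall r, E r -> v <= r) /\ (forall l, (forall r, E r -> l <= r) -> l <= v).

(* Gaussian (outer) measure of A under N(m,1):  infimum over countable interval
   covers (Method I construction); on Borel sets this is  \int_A gauss_pdf m. *)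
Definition gmeas (m : R) (A : R -> Prop) : R :=
  epsilon (inhabits 0) (fun v => is_glb (cover_sum m A) v).

Definition is_quantizer (N : nat) (Z : R -> nat) : Prop :=
  (forall y, (1 <= Z y <= N)%nat) /\ (forall z, borel (fun y => Z y = z)).

Definition xpt (x0 d : R) (i : nat) : R := x0 + INR i * d.

Definition trans (g x0 d : R) (Z : R -> nat) (i z : nat) : R :=
  gmeas (g * xpt x0 d i) (fun y => Z y = z).

Definition pZ (K : nat) (PX : nat -> R) (g x0 d : R) (Z : R -> nat) (z : nat) : R :=
  sumR K (fun i => PX i * trans g x0 d Z i z).

(* I(X; Z(Y)); terms with trans = 0 vanish (0 * ln _ = 0). *)
Definition MI (K N : nat) (PX : nat -> R) (g x0 d : R) (Z : R -> nat) : R :=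
  sumR K (fun i => sumR N (fun j =>
    PX i * trans g x0 d Z i (S j) *
      ln (trans g x0 d Z i (S j) / pZ K PX g x0 d Z (S j)))).

Definition post (K : nat) (PX : nat -> R) (g x0 d : R) (Z : R -> nat) (i z : nat) : R :=
  PX i * trans g x0 d Z i z / pZ K PX g x0 d Z z.

Definition in_range (K N : nat) (PX : nat -> R) (g x0 d : R) (Z : R -> nat) (z : nat) : Prop :=
  (1 <= z <= N)%nat /\ 0 < pZ K PX g x0 d Z z.

Definition fch (g x y : R) : R := / sqrt (2 * PI) * exp (- (y - g * x) ^ 2 / 2).

Definition score (K : nat) (PX : nat -> R) (g x0 d : R) (Z : R -> nat) (z : nat) (y : R) : R :=
  sumR K (fun i => PX i * fch g (xpt x0 d i) y * ln (post K PX g x0 d Z i z)).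

Definition Sset (K N : nat) (PX : nat -> R) (g x0 d : R) (Z : R -> nat) (z : nat) (y : R) : Prop :=
  forall z', in_range K N PX g x0 d Z z' -> z' <> z ->
    score K PX g x0 d Z z y >= score K PX g x0 d Z z' y.

Definition is_interval (I : R -> Prop) : Prop :=
  forall a b c, I a -> I b -> a <= c <= b -> I c.

Definition union_disj_intervals (M : nat) (A : R -> Prop) : Prop :=
  exists (m : nat) (I : nat -> R -> Prop),
    (m <= M)%nat /\
    (forall k, (k < m)%nat -> is_interval (I k)) /\
    (forall k l y, (k < l < m)%nat -> I k y -> I l y -> False) /\
    (forall y, A y <-> exists k, (k < m)%nat /\ I k y).

(* Main.v *)
Require Import Defs.
From Stdlib Require Import Reals Lra Lia Arith Classical ClassicalEpsilon.
Open Scope R_scope.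

Inductive chainI (A : R -> Prop) : nat -> R -> Prop :=
| ch0 : forall b, A b -> chainI A 0 b
| chS : forall k a g b, chainI A k a -> a < g -> g < b -> ~ A g -> A b -> chainI A (S k) b.

Lemma chain_end A k b : chainI A k b -> A b.
Proof. intros H; destruct H; auto. Qed.

Lemma chain_ext A A' k b : (forall y, A y <-> A' y) -> chainI A k b -> chainI A' k b.
Proof.
  intros E H; induction H.
  - apply ch0; apply E; auto.
  - apply chS with a g; auto. intro Hg; apply H2; apply E; auto. apply E; auto.
Qed.

Lemma chain_extend A k a b : chainI A k a -> a <= b -> A b -> chainI A k b.
Proof.
  intros H Hab Hb; destruct H.
  - apply ch0; auto.
  - apply chS with a g; auto; lra.
Qed.

Lemma chain_true A k b : (forall y, A y) -> chainI A k b -> k = 0%nat.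
Proof. intros HA H; destruct H; auto. exfalso; apply H2; auto. Qed.

Lemma chain_le A k b : chainI A k b -> forall j, (j <= k)%nat -> exists b', chainI A j b'.
Proof.
  intros H; induction H; intros j Hj.
  - assert (j = 0%nat) by lia; subst; exists b; apply ch0; auto.
  - destruct (Nat.eq_dec j (S k)). subst. exists b; apply chS with a g; auto.
    apply IHchainI; lia.
Qed.

Lemma chain_pair A C k b : chainI (fun y => A y /\ C y) k b ->
  exists k1 k2, k = (k1 + k2)%nat /\ chainI A k1 b /\ chainI C k2 b.
Proof.
  intros H; induction H.
  - exists 0%nat, 0%nat; destruct H; repeat split; try apply ch0; auto.
  - destruct IHchainI as [k1 [k2 [Ek [HA1 HC2]]]]. destruct H3 as [Ab Cb].
    destruct (classic (A g)) as [Ag|nAg].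
    + exists k1, (S k2). split. lia. split. apply chain_extend with a; auto; lra.
      apply chS with a g; auto; intro Cg; apply H2; auto.
    + exists (S k1), k2. split. lia. split. apply chS with a g; auto.
      apply chain_extend with a; auto; lra.
Qed.

Lemma chain_inter : forall n (B : nat -> R -> Prop) r,
  (forall j k b, (j < n)%nat -> chainI (B j) k b -> (k <= r)%nat) ->
  forall k b, chainI (fun y => forall j, (j < n)%nat -> B j y) k b -> (k <= n * r)%nat.
Proof.
  induction n; intros B r HB k b H.
  - apply chain_true in H. lia. intros y j Hj; lia.
  - apply chain_ext with (A' := fun y => (forall j, (j < n)%nat -> B j y) /\ B n y) in H.
    + apply chain_pair in H. destruct H as [k1 [k2 [Ek [H1 H2]]]].
      assert (k1 <= n * r)%nat. { apply IHn with B b; auto. intros j0 k0 b0 Hj0 Hc0; apply HB with j0 b0; auto; lia. }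
      assert (k2 <= r)%nat. { apply HB with n b; auto. }
      simpl; lia.
    + intros y; split. intros Hy; split; intros; apply Hy; lia.
      intros [Hy1 Hy2] j Hj. destruct (Nat.eq_dec j n). subst; auto. apply Hy1; lia.
Qed.

Lemma udi_ext M A B : (forall y, A y <-> B y) -> union_disj_intervals M A -> union_disj_intervals M B.
Proof.
  intros E [m [I [H1 [H2 [H3 H4]]]]]. exists m, I; repeat split; auto.
  intros; apply H4; apply E; auto. intros; apply E; apply H4; auto.
Qed.

Lemma udi_mono M M' A : union_disj_intervals M A -> (M <= M')%nat -> union_disj_intervals M' A.
Proof. intros [m [I [H1 H]]] HM. exists m, I; split; auto; lia. Qed.

Lemma udi_empty A : (forall y, ~ A y) -> union_disj_intervals 0 A.
Proof.
  intros HA. exists 0%nat, (fun _ _ => False). split; [lia|]. split; [intros k Hk a b c Ha; destruct Ha|]. split.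
  intros k l y0 _ []. intros y; split. intros Ay; exfalso; apply (HA y Ay). intros [k [Hk _]]; lia.
Qed.

Lemma udi_interval A : is_interval A -> union_disj_intervals 1 A.
Proof.
  intros HA. exists 1%nat, (fun _ => A). split; [lia|]. split; [intros; auto|]. split; [intros; lia|].
  intros y; split. intros Ay; exists 0%nat; split; auto; lia. intros [k [_ Hk]]; auto.
Qed.

Lemma udi_union m1 m2 L Rt c : union_disj_intervals m1 L -> union_disj_intervals m2 Rt ->
  (forall y, L y -> y < c) -> (forall y, Rt y -> c < y) ->
  union_disj_intervals (m1 + m2) (fun y => L y \/ Rt y).
Proof.
  intros [n1 [I1 [A1 [B1 [C1 D1]]]]] [n2 [I2 [A2 [B2 [C2 D2]]]]] HL HR.
  exists (n1 + n2)%nat, (fun k => if Nat.ltb k n1 then I1 k else I2 (k - n1)%nat).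
  split; [lia|]. split; [|split].
  - intros k Hk. destruct (Nat.ltb_spec k n1). apply B1; auto. apply B2; lia.
  - intros k l y Hkl. destruct (Nat.ltb_spec k n1); destruct (Nat.ltb_spec l n1); intros Hk Hl.
    + apply (C1 k l y); auto; lia.
    + assert (L y) by (apply D1; exists k; auto).
      assert (Rt y) by (apply D2; exists (l - n1)%nat; split; auto; lia).
      specialize (HL y H1); specialize (HR y H2); lra.
    + lia.
    + apply (C2 (k - n1)%nat (l - n1)%nat y); auto; lia.
  - intros y; split.
    + intros [Ly|Ry].
      * apply D1 in Ly; destruct Ly as [k [Hk Iy]]. exists k; split. lia.
        destruct (Nat.ltb_spec k n1); auto; lia.
      * apply D2 in Ry; destruct Ry as [k [Hk Iy]]. exists (k + n1)%nat; split. lia.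
        destruct (Nat.ltb_spec (k + n1) n1). lia. replace (k + n1 - n1)%nat with k by lia; auto.
    + intros [k [Hk Iy]]. destruct (Nat.ltb_spec k n1).
      * left; apply D1; exists k; auto.
      * right; apply D2; exists (k - n1)%nat; split; auto; lia.
Qed.

Lemma exist_max (P : nat -> Prop) M : P 0%nat -> ~ P M -> exists k, (k < M)%nat /\ P k /\ ~ P (S k).
Proof.
  induction M; intros H0 HM. contradiction.
  destruct (classic (P M)). exists M; repeat split; auto.
  destruct (IHM H0 H) as [k [Hk [Pk nPk]]]. exists k; repeat split; auto.
Qed.

Section Split.
Variables (A : R -> Prop) (c : R).
Let Lf y := A y /\ y < c.
Let Rt y := A y /\ c < y.

Lemma chain_weakL k b : chainI Lf k b -> chainI A k b.
Proof.
  intros H; induction H. apply ch0; destruct H; auto.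
  apply chS with a g; auto. intro Ag; apply H2; split; auto. destruct H3; lra.
  destruct H3; auto.
Qed.

Lemma chain_concat : ~ A c -> forall k2 b2, chainI Rt k2 b2 -> forall k1 b1, chainI Lf k1 b1 ->
  chainI A (k1 + k2 + 1) b2.
Proof.
  intros nAc k2 b2 H; induction H; intros k1 b1 HL1.
  - replace (k1 + 0 + 1)%nat with (S k1) by lia. destruct H as [Hb0 Hb1].
    apply chS with b1 c; auto. apply chain_weakL; auto. apply chain_end in HL1; destruct HL1; auto.
  - replace (k1 + S k + 1)%nat with (S (k1 + k + 1)) by lia.
    assert (Ra := chain_end _ _ _ H). destruct Ra as [_ Hca]. destruct H3 as [Ab _].
    apply chS with a g; auto. apply (IHchainI k1 b1 HL1).
    intro Ag; apply H2; split; auto; lra.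
Qed.
End Split.

Lemma chain_udi : forall M A, (forall b, ~ chainI A M b) -> union_disj_intervals M A.
Proof.
  intros M; induction M as [M IH] using (well_founded_induction lt_wf); intros A HA.
  destruct M as [|M'].
  - apply udi_empty. intros y Ay; apply (HA y); apply ch0; auto.
  - destruct (classic (is_interval A)) as [Hi|Hni].
    + apply udi_mono with 1%nat. apply udi_interval; auto. lia.
    + unfold is_interval in Hni.
      apply not_all_ex_not in Hni; destruct Hni as [a Hni].
      apply not_all_ex_not in Hni; destruct Hni as [b Hni].
      apply not_all_ex_not in Hni; destruct Hni as [c Hni].
      apply imply_to_and in Hni; destruct Hni as [Aa Hni].
      apply imply_to_and in Hni; destruct Hni as [Ab Hni].
      apply imply_to_and in Hni; destruct Hni as [Hac nAc].
      assert (a <> c) by (intro; subst; auto).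
      assert (b <> c) by (intro; subst; auto).
      assert (ac : a < c) by lra. assert (cb : c < b) by lra.
      set (Lf := fun y => A y /\ y < c). set (Rt := fun y => A y /\ c < y).
      assert (Hcat : forall k1 b1 k2 b2, chainI Lf k1 b1 -> chainI Rt k2 b2 -> chainI A (k1 + k2 + 1) b2).
      { intros. apply (chain_concat A c nAc k2 b2 H2 k1 b1 H1). }
      assert (Hno : forall k b', chainI A k b' -> (k < S M')%nat).
      { intros k b' Hk. destruct (le_lt_dec (S M') k); auto. exfalso.
        destruct (chain_le A k b' Hk (S M') l) as [b'' Hb]. apply (HA b''); auto. }
      destruct (exist_max (fun k => exists b', chainI Lf k b') (S M')) as [k1 [_ [[b1 Hb1] nL]]].
      { exists a; apply ch0; split; auto. }
      { intros [b1 Hb1]. specialize (Hno _ _ (Hcat _ _ _ _ Hb1 (ch0 Rt b (conj Ab cb)))). lia. }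
      destruct (exist_max (fun k => exists b', chainI Rt k b') (S M')) as [k2 [_ [[b2 Hb2] nR]]].
      { exists b; apply ch0; split; auto. }
      { intros [b2 Hb2]. specialize (Hno _ _ (Hcat _ _ _ _ (ch0 Lf a (conj Aa ac)) Hb2)). lia. }
      specialize (Hno _ _ (Hcat _ _ _ _ Hb1 Hb2)).
      assert (UL : union_disj_intervals (S k1) Lf).
      { apply IH. lia. intros b' Hb'; apply nL; exists b'; auto. }
      assert (UR : union_disj_intervals (S k2) Rt).
      { apply IH. lia. intros b' Hb'; apply nR; exists b'; auto. }
      apply udi_mono with (S k1 + S k2)%nat; [|lia].
      apply udi_ext with (fun y => Lf y \/ Rt y).
      * intros y; unfold Lf, Rt; split. intros [[? ?]|[? ?]]; auto.
        intros Ay. destruct (Rtotal_order y c) as [?|[?|?]]; auto. subst; contradiction.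
      * apply udi_union with c; auto. intros y [? ?]; auto. intros y [? ?]; auto.
Qed.

Definition Esum (K : nat) (be la : nat -> R) (y : R) : R :=
  sumR K (fun i => be i * exp (la i * y)).

Inductive alt (G : R -> R) : nat -> R -> R -> Prop :=
| alt0 : forall s t, 0 < s * G t -> alt G 0 s t
| altS : forall n s t t', alt G n (- s) t -> t < t' -> 0 < s * G t' -> alt G (S n) s t'.

Lemma alt_last G n s t : alt G n s t -> 0 < s * G t.
Proof. intros H; destruct H; auto. Qed.

Lemma alt_scale G F : (forall y, exists c, 0 < c /\ F y = c * G y) ->
  forall n s t, alt G n s t -> alt F n s t.
Proof.
  intros HF n s t H; induction H.
  - apply alt0. destruct (HF t) as [c [Hc E]]; rewrite E.
    replace (s * (c * G t)) with (c * (s * G t)) by ring. apply Rmult_lt_0_compat; auto.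
  - apply altS with t; auto. destruct (HF t') as [c [Hc E]]; rewrite E.
    replace (s * (c * G t')) with (c * (s * G t')) by ring. apply Rmult_lt_0_compat; auto.
Qed.

Lemma sign_help s Ft Ft0 D t t0 : 0 < s * Ft -> 0 < - s * Ft0 -> Ft - Ft0 = D * (t - t0) -> t0 < t -> 0 < s * D.
Proof.
  intros H1 H2 E Ht.
  assert (0 < s * (Ft - Ft0)) by nra.
  rewrite E in H. nra.
Qed.

Lemma alt_mvt F F' : (forall y, derivable_pt_lim F y (F' y)) ->
  forall n s t, alt F (S n) s t -> exists xi, xi < t /\ alt F' n s xi.
Proof.
  intros HD n; induction n; intros s t H.
  - inversion H; subst. inversion H1; subst.
    destruct (MVT_cor2 F F' t0 t H2 (fun c _ => HD c)) as [xi [E Hxi]].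
    exists xi; split. lra. apply alt0. eapply sign_help; eauto.
  - inversion H; subst. destruct (IHn (- s) t0 H1) as [xi0 [Hxi0 A0]].
    assert (L := alt_last _ _ _ _ H1).
    destruct (MVT_cor2 F F' t0 t H2 (fun c _ => HD c)) as [xi [E Hxi]].
    exists xi; split. lra. apply altS with xi0; auto. lra.
    eapply sign_help; eauto.
Qed.

Lemma sumR_ext n f h : (forall i, (i < n)%nat -> f i = h i) -> sumR n f = sumR n h.
Proof.
  induction n; intros E; simpl; auto. rewrite IHn. rewrite E; auto. intros; apply E; lia.
Qed.

Lemma sumR_scal c n f : c * sumR n f = sumR n (fun i => c * f i).
Proof. induction n; simpl. ring. rewrite <- IHn; ring. Qed.

Lemma esum_deriv K be la y :
  derivable_pt_lim (Esum K be la) y (Esum K (fun i => be i * la i) la y).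
Proof.
  induction K.
  - unfold Esum; simpl. apply (derivable_pt_lim_const 0 y).
  - unfold Esum; simpl.
    assert (H2 : derivable_pt_lim (fun y => be K * exp (la K * y)) y (be K * la K * exp (la K * y))).
    { replace (be K * la K * exp (la K * y)) with (be K * (exp (la K * y) * (la K * 1))) by ring.
      apply (derivable_pt_lim_scal (comp exp (mult_real_fct (la K) id))).
      apply (derivable_pt_lim_comp (mult_real_fct (la K) id) exp).
      apply derivable_pt_lim_scal. apply derivable_pt_lim_id. apply derivable_pt_lim_exp. }
    apply (derivable_pt_lim_plus (Esum K be la) (fun y => be K * exp (la K * y))); auto.
Qed.

Lemma alt_bound : forall K be la n s t, alt (Esum K be la) n s t -> (n < K)%nat.
Proof.
  induction K; intros be la n s t H.
  - apply alt_last in H. unfold Esum in H; simpl in H. lra.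
  - destruct n as [|m]. lia.
    set (F := fun y => Esum K be (fun i => la i - la K) y + be K).
    assert (HF : forall y, exists c, 0 < c /\ F y = c * Esum (S K) be la y).
    { intros y. exists (exp (- la K * y)). split. apply exp_pos.
      unfold F, Esum; simpl. rewrite Rmult_plus_distr_l, sumR_scal. f_equal.
      apply sumR_ext; intros i _.
      replace ((la i - la K) * y) with (la i * y + (- la K * y)) by ring. rewrite exp_plus. ring.
      replace (exp (- la K * y) * (be K * exp (la K * y))) with (be K * exp (- la K * y + la K * y)) by (rewrite exp_plus; ring).
      replace (- la K * y + la K * y) with 0 by ring. rewrite exp_0; ring. }
    apply (alt_scale _ _ HF) in H.
    assert (HD : forall y, derivable_pt_lim F y (Esum K (fun i => be i * (la i - la K)) (fun i => la i - la K) y)).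
    { intros y. rewrite <- (Rplus_0_r (Esum _ _ _ y)).
      apply (derivable_pt_lim_plus (Esum K be (fun i => la i - la K)) (fct_cte (be K))).
      apply esum_deriv. apply derivable_pt_lim_const. }
    destruct (alt_mvt _ _ HD m s t H) as [xi [_ Hxi]].
    apply IHK in Hxi. lia.
Qed.

Lemma esum_bump n be la eps y :
  Esum (S n) (fun i => be i + (if Nat.eqb i 0 then eps else 0)) la y =
  Esum (S n) be la y + eps * exp (la 0%nat * y).
Proof.
  induction n.
  - unfold Esum; simpl; ring.
  - unfold Esum in *. change (sumR (S (S n)) ?f) with (sumR (S n) f + f (S n)).
    rewrite IHn. cbv beta. change (Nat.eqb (S n) 0) with false. cbv iota. ring.
Qed.

Lemma chain_alt K' be la : forall k b, chainI (fun y => 0 <= Esum (S K') be la y) k b ->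
  exists del, 0 < del /\ forall eps, 0 < eps < del ->
    alt (Esum (S K') (fun i => be i + (if Nat.eqb i 0 then eps else 0)) la) (2 * k) 1 b.
Proof.
  intros k b H; induction H.
  - exists 1; split. lra. intros eps Heps. apply alt0. rewrite esum_bump.
    assert (0 < eps * exp (la 0%nat * b)) by (apply Rmult_lt_0_compat; [lra| apply exp_pos]). lra.
  - destruct IHchainI as [d0 [Hd0 Hal]].
    assert (Hg : Esum (S K') be la g < 0) by (apply Rnot_le_lt; auto).
    assert (He := exp_pos (la 0%nat * g)).
    set (d1 := - Esum (S K') be la g / exp (la 0%nat * g)).
    assert (Hd1 : 0 < d1) by (unfold d1; apply Rdiv_lt_0_compat; lra).
    exists (Rmin d0 d1); split. apply Rmin_glb_lt; auto.
    intros eps Heps. assert (eps < d0) by (apply Rlt_le_trans with (Rmin d0 d1); [lra|apply Rmin_l]).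
    assert (eps < d1) by (apply Rlt_le_trans with (Rmin d0 d1); [lra|apply Rmin_r]).
    replace (2 * S k)%nat with (S (S (2 * k))) by lia.
    apply altS with g; auto.
    + apply altS with a; auto. rewrite Ropp_involutive. apply Hal; lra.
      rewrite esum_bump.
      assert (eps * exp (la 0%nat * g) < - Esum (S K') be la g).
      { unfold d1 in H5. apply Rmult_lt_compat_r with (r := exp (la 0%nat * g)) in H5; auto.
        unfold Rdiv in H5. rewrite Rmult_assoc, Rinv_l in H5; lra. }
      lra.
    + rewrite esum_bump.
      assert (0 < eps * exp (la 0%nat * b)) by (apply Rmult_lt_0_compat; [lra| apply exp_pos]). lra.
Qed.

Lemma esum_chain_bound K be la k b : (1 <= K)%nat ->
  chainI (fun y => 0 <= Esum K be la y) k b -> (k <= (K - 1) / 2)%nat.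
Proof.
  intros HK H. destruct K as [|K']. lia.
  destruct (chain_alt K' be la k b H) as [d [Hd Hal]].
  specialize (Hal (d / 2) ltac:(lra)). apply alt_bound in Hal.
  rewrite <- (Nat.div_mul k 2) by lia. apply Nat.Div0.div_le_mono; lia.
Qed.

Lemma sumR_diff n f h c u : (forall i, f i - h i = c * u i) -> sumR n f - sumR n h = c * sumR n u.
Proof. intros E; induction n; simpl. ring.
  replace (sumR n f + f n - (sumR n h + h n)) with ((sumR n f - sumR n h) + (f n - h n)) by ring.
  rewrite IHn, E. ring. Qed.

Lemma score_diff K PX g x0 d Q z z' y :
  score K PX g x0 d Q z y - score K PX g x0 d Q z' y =
  (/ sqrt (2 * PI) * exp (- y ^ 2 / 2)) *
  Esum K (fun i => PX i * exp (- (g * xpt x0 d i) ^ 2 / 2) *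
             (ln (post K PX g x0 d Q i z) - ln (post K PX g x0 d Q i z')))
         (fun i => g * xpt x0 d i) y.
Proof.
  unfold score, Esum. apply sumR_diff. intros i. unfold fch. cbv beta.
  set (a := g * xpt x0 d i). clearbody a.
  replace (exp (- (y - a) ^ 2 / 2)) with (exp (- y ^ 2 / 2) * exp (- a ^ 2 / 2) * exp (a * y)).
  ring. rewrite <- !exp_plus. f_equal. field.
Qed.

Lemma cpos y : 0 < / sqrt (2 * PI) * exp (- y ^ 2 / 2).
Proof.
  apply Rmult_lt_0_compat. apply Rinv_0_lt_compat, sqrt_lt_R0. generalize PI_RGT_0; lra. apply exp_pos.
Qed.

Theorem theorem1 (K N : nat) (g d x0 : R) (PX : nat -> R) (Z : R -> nat) :
  (2 <= K)%nat -> (1 <= N)%nat -> 0 < g -> 0 < d ->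
  (forall i, (i < K)%nat -> 0 < PX i) ->
  sumR K PX = 1 ->
  is_quantizer N Z ->
  (forall Z', is_quantizer N Z' -> MI K N PX g x0 d Z' <= MI K N PX g x0 d Z) ->
  (forall i z, (i < K)%nat -> in_range K N PX g x0 d Z z -> 0 < post K PX g x0 d Z i z) ->
  forall z, in_range K N PX g x0 d Z z ->
    union_disj_intervals ((N - 1) * ((K - 1) / 2) + 1)
      (Sset K N PX g x0 d Z z).
Proof.
  intros HK HN Hg Hd HPX HS HZ Hopt Hpost z Hz.
  set (r := ((K - 1) / 2)%nat).
  set (B := fun z' y => in_range K N PX g x0 d Z z' -> z' <> z ->
                        score K PX g x0 d Z z y >= score K PX g x0 d Z z' y).
  set (zz := fun j => if Nat.ltb (j + 1) z then (j + 1)%nat else (j + 2)%nat).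
  assert (Hzz : forall j, zz j <> z).
  { intros j; unfold zz; destruct (Nat.ltb_spec (j + 1) z); lia. }
  assert (HB : forall z' k b, chainI (B z') k b -> (k <= r)%nat).
  { intros z' k b Hc. destruct (classic (in_range K N PX g x0 d Z z' /\ z' <> z)) as [[Hr Hne]|Hn].
    - apply esum_chain_bound with
        (be := fun i => PX i * exp (- (g * xpt x0 d i) ^ 2 / 2) *
             (ln (post K PX g x0 d Z i z) - ln (post K PX g x0 d Z i z')))
        (la := fun i => g * xpt x0 d i) (b := b). lia.
      apply chain_ext with (B z'); auto. intros y. unfold B.
      assert (E := score_diff K PX g x0 d Z z z' y). assert (C := cpos y).
      split.
      + intros H. specialize (H Hr Hne).
        destruct (Rle_or_lt 0 (Esum K (fun i => PX i * exp (- (g * xpt x0 d i) ^ 2 / 2) *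
             (ln (post K PX g x0 d Z i z) - ln (post K PX g x0 d Z i z'))) (fun i => g * xpt x0 d i) y)); auto.
        nra.
      + intros H _ _. nra.
    - apply chain_true in Hc. lia. intros y Hr Hne. exfalso; apply Hn; auto. }
  apply chain_udi. intros b Hc.
  apply chain_ext with (A' := fun y => forall j, (j < N - 1)%nat -> B (zz j) y) in Hc.
  - apply chain_inter with (r := r) in Hc. lia. intros j k b0 _ H; apply (HB _ _ _ H).
  - intros y; split.
    + intros H j Hj Hr Hne. apply H; auto.
    + intros H z' Hr Hne. destruct Hz as [Hz1 _]. destruct Hr as [Hr1 Hr2].
      set (j := if Nat.ltb z' z then (z' - 1)%nat else (z' - 2)%nat).
      assert (Ej : zz j = z').
      { unfold zz, j. destruct (Nat.ltb_spec z' z); destruct (Nat.ltb_spec (z' - 1 + 1) z);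
          destruct (Nat.ltb_spec (z' - 2 + 1) z); lia. }
      assert (Hj : (j < N - 1)%nat).
      { unfold j. destruct (Nat.ltb_spec z' z); lia. }
      specialize (H j Hj). rewrite Ej in H. apply H; auto. split; auto.
Qed.
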